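(* Let $X\subseteq\{0,1\}^{\mathbb Z}$ be a sandwich measure-theoretically subordinate subshift and let $\rho$ be any base measure, with marginals $\nu_0$ (first coordinate) and $\nu_1$ (second coordinate). Then $\nu_0$ and $\nu_1$ are ergodic and do not depend on the choice of the base measure $\rho$. Moreover, \[ \nu_1(1)=\sup_{\mu\in\mathcal M(X)}\mu(1),\qquad \nu_0(0)=\sup_{\mu\in\mathcal M(X)}\mu(0), \] and $\nu_1$, resp. $\nu_0$, is the unique member of $\mathcal M(X)$ attaining the first, resp. second, supremum.
   Context: $\sigma$ is the left shift on $\{0,1\}^{\mathbb Z}$; $\mathcal M(Y)$ is the set of shift-invariant Borel probability measures on $Y$; $\mu(a)=\mu(\{x:x_0=a\})$. $N(w,x,y)=(1-y)w+yx$ coordinatewise, $\pi_{1,2}$ the projection to the first two coordinates. A subshift $X$ is a sandwich measure-theoretically subordinate subshift if there is $\rho\in\mathcal M((\{0,1\}^{\mathbb Z})^2,\sigma\times\sigma)$ with $\mathcal M(X)=\{N_*(\lambda):\lambda\in\mathcal M((\{0,1\}^{\mathbb Z})^3,\sigma^{\times3}),(\pi_{1,2})_*\lambda=\rho\}$; such $\rho$ is a pre-base measure, and a base measure if moreover $\rho(\{(w,x):w\le x\text{ coordinatewise}\})=1$. *)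

(* Defs.v *)
From HB Require Import structures.
From mathcomp Require Import all_boot all_order all_algebra.
From mathcomp Require Import all_classical all_reals all_analysis.
Set Implicit Arguments. Unset Strict Implicit. Unset Printing Implicit Defensive.
Import Order.TTheory GRing.Theory Num.Theory.
Local Open Scope classical_set_scope.
Local Open Scope ring_scope.

(* Full shift over a finite alphabet A: A^Z, with the sigma-algebra generated
   by the one-coordinate cylinders (= Borel sigma-algebra of the product
   topology, since A is finite and Z is countable). *)
Definition cyl (A : Type) : set (set (int -> A)) :=
  [set C | exists (i : int) (a : A), C = [set x | x i = a]].

Definition Sh (A : pointedType) := g_sigma_algebraType (@cyl A).

Definition shift (A : Type) (x : int -> A) : int -> A := fun i => x (i + 1).

(* {0,1}^Z, ({0,1}^Z)^2 ~ ({0,1}^2)^Z, ({0,1}^Z)^3 ~ ({0,1}^3)^Z *)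
Definition Om1 := Sh bool.
Definition Om2 := Sh (bool * bool)%type.
Definition Om3 := Sh (bool * bool * bool)%type.

Definition shift_invariant (A : pointedType) (R : realType)
  (P : probability (Sh A) R) : Prop :=
  forall B : set (Sh A), measurable B -> P (@shift A @^-1` B) = P B.

Definition subshift (X : set (int -> bool)) : Prop :=
  closed (X : set (prod_topology (fun _ : int => bool))) /\ @shift bool @` X = X.

Definition MX (R : realType) (X : set (int -> bool)) : set (probability Om1 R) :=
  [set mu | shift_invariant mu /\ mu (X : set Om1) = 1%E].

(* N(w,x,y) = (1-y)w + yx coordinatewise; triples z i = ((w i, x i), y i) *)
Definition Nmap (z : int -> bool * bool * bool) : int -> bool :=
  fun i => if (z i).2 then (z i).1.2 else (z i).1.1.

Definition pi12 (z : int -> bool * bool * bool) : int -> bool * bool :=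
  fun i => (z i).1.

Definition is_prebase (R : realType) (X : set (int -> bool))
  (rho : probability Om2 R) : Prop :=
  shift_invariant rho /\
  forall mu : probability Om1 R,
    MX X mu <->
    exists lam : probability Om3 R,
      shift_invariant lam /\
      (forall B : set Om2, measurable B -> lam (pi12 @^-1` B) = rho B) /\
      (forall B : set Om1, measurable B -> lam (Nmap @^-1` B) = mu B).

Definition sandwich_mts (R : realType) (X : set (int -> bool)) : Prop :=
  exists rho : probability Om2 R, is_prebase X rho.

Definition is_base (R : realType) (X : set (int -> bool))
  (rho : probability Om2 R) : Prop :=
  is_prebase X rho /\
  rho [set z : Om2 | forall i, ((z i).1 <= (z i).2)%O] = 1%E.

Definition marg0 (R : realType) (rho : probability Om2 R) (B : set Om1) : \bar R :=
  rho ((fun z : int -> bool * bool => fun i => (z i).1) @^-1` B).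
Definition marg1 (R : realType) (rho : probability Om2 R) (B : set Om1) : \bar R :=
  rho ((fun z : int -> bool * bool => fun i => (z i).2) @^-1` B).

Definition ergodic (R : realType) (nu : set Om1 -> \bar R) : Prop :=
  forall B : set Om1, measurable B -> @shift bool @^-1` B = B ->
    nu B = 0%E \/ nu B = 1%E.

Definition cyl0 (b : bool) : set Om1 := [set x | x 0 = b].

Definition supMX (R : realType) (X : set (int -> bool)) (b : bool) : \bar R :=
  ereal_sup ((fun mu : probability Om1 R => mu (cyl0 b)) @` MX X).

(* Main.v *)
Require Import Defs.
From HB Require Import structures.
From mathcomp Require Import all_boot all_order all_algebra.
From mathcomp Require Import all_classical all_reals all_analysis.
From mathcomp Require Import ring lra.
Import Order.TTheory GRing.Theory Num.Theory.
Local Open Scope classical_set_scope.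
Local Open Scope ring_scope.
Set Implicit Arguments. Unset Strict Implicit. Unset Printing Implicit Defensive.

Fixpoint inl (A : Type) (a : A) (s : seq A) : Prop :=
  match s with [::] => False | b :: s => b = a \/ inl a s end.

Lemma cyl_meas (A : pointedType) (i : int) (a : A) :
  measurable ([set x | x i = a] : set (Sh A)).
Proof. by apply: sub_sigma_algebra; exists i, a. Qed.

Lemma coord_meas_list (A : pointedType) (P : A -> Prop) (i : int) (s : seq A) :
  measurable ([set x | P (x i) /\ inl (x i) s] : set (Sh A)).
Proof.
elim: s => [|a s IH].
  by rewrite (_ : [set x | _] = set0) //; apply/seteqP; split => x //= [].
rewrite (_ : [set x | _] = ([set x : Sh A | x i = a /\ P a]) `|`
    [set x | P (x i) /\ inl (x i) s]); last first.
  apply/seteqP; split => x /=.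
    by move=> [Px [Ha|Hs]]; [left; rewrite Ha|right].
  by move=> [[-> Pa]|[Px Hs]]; split => //; [left|right].
apply: measurableU => //.
have [Pa|nPa] := pselect (P a).
  rewrite (_ : [set x | _] = [set x : Sh A | x i = a]); first exact: cyl_meas.
  by apply/seteqP; split => x /= => [[]|].
by rewrite (_ : [set x | _] = set0) //; apply/seteqP; split => x //= [].
Qed.

Lemma coord_meas (A : pointedType) (s : seq A) (hs : forall a, inl a s)
  (P : A -> Prop) (i : int) :
  measurable ([set x | P (x i)] : set (Sh A)).
Proof.
rewrite (_ : [set x | _] = [set x | P (x i) /\ inl (x i) s]).
  exact: coord_meas_list.
by apply/seteqP; split => x /= => [Px|[]//]; split.
Qed.

Definition allb1 : seq bool := [:: true; false].
Lemma allb1P a : inl a allb1. Proof. by case: a => /=; tauto. Qed.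
Definition allb2 : seq (bool * bool) := [:: (true,true); (true,false); (false,true); (false,false)].
Lemma allb2P a : inl a allb2. Proof. by case: a => [[] []] /=; tauto. Qed.
Definition allb3 : seq (bool * bool * bool) :=
  [seq (p, c) | p <- allb2, c <- allb1].
Lemma allb3P a : inl a allb3. Proof. by case: a => [[[] []] []] /=; tauto. Qed.

Lemma map_meas (A B : pointedType) (s : seq A) (hs : forall a, inl a s)
  (h : A -> B) :
  measurable_fun setT ((fun x i => h (x i)) : Sh A -> Sh B).
Proof.
refine (@measurability _ _ (Sh A) (Sh B) setT (fun x i => h (x i)) (@cyl B) erefl _).
move=> _ [C [i [c ->]] <-].
rewrite setTI; have := coord_meas hs (fun a => h a = c) i; apply.
Qed.

Lemma shift_meas (A : pointedType) :
  measurable_fun setT (@Defs.shift A : Sh A -> Sh A).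
Proof.
refine (@measurability _ _ (Sh A) (Sh A) setT (@Defs.shift A) (@cyl A) erefl _).
move=> _ [C [i [c ->]] <-].
rewrite setTI; exact: (cyl_meas (i + 1) c).
Qed.


Lemma shift_inv_coord (A : pointedType) (R : realType) (P : probability (Sh A) R)
  (hP : shift_invariant P) (a : A) (i : int) :
  P [set x : Sh A | x i = a] = P [set x : Sh A | x 0 = a].
Proof.
have step j : P [set x : Sh A | x (j + 1) = a] = P [set x : Sh A | x j = a].
  exact: (hP _ (cyl_meas j a)).
have pos n : P [set x : Sh A | x (n%:Z) = a] = P [set x : Sh A | x 0 = a].
  elim: n => // n IH.
  by rewrite (_ : (n.+1)%:Z = n%:Z + 1) ?step // -addn1 PoszD.
have neg n : P [set x : Sh A | x (- n%:Z) = a] = P [set x : Sh A | x 0 = a].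
  elim: n => // n IH.
  rewrite -IH -step (_ : - (n.+1)%:Z + 1 = - n%:Z) //.
  by rewrite -addn1 PoszD opprD addrNK.
case: i => n; first exact: pos.
by rewrite NegzE; exact: neg.
Qed.

Definition pf d d' (T : measurableType d) (T' : measurableType d') (R : realType)
  (P : probability T R) (f : T -> T') (mf : measurable_fun setT f) : set T' -> \bar R :=
  fun A => P (f @^-1` A).

Section pf_prob.
Context d d' (T : measurableType d) (T' : measurableType d') (R : realType).
Variables (P : probability T R) (f : T -> T') (mf : measurable_fun setT f).

Let pf0 : pf P mf set0 = 0.
Proof. by rewrite /pf preimage_set0 measure0. Qed.

Let pf_ge0 A : (0 <= pf P mf A)%E.
Proof. exact: measure_ge0. Qed.

Let pf_sigma_additive : semi_sigma_additive (pf P mf).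
Proof.
move=> F mF tF mUF; rewrite /pf preimage_bigcup.
apply: measure_semi_sigma_additive.
- by move=> n; rewrite -[X in measurable X]setTI; exact: mf.
- apply/trivIsetP => /= i j _ _ ij; rewrite -preimage_setI.
  by move/trivIsetP : tF => /(_ _ _ _ _ ij) ->//; rewrite preimage_set0.
- by rewrite -preimage_bigcup -[X in measurable X]setTI; exact: mf.
Qed.

HB.instance Definition _ := isMeasure.Build _ _ _
  (pf P mf) pf0 pf_ge0 pf_sigma_additive.

Let pf1 : pf P mf [set: T'] = 1%E.
Proof. by rewrite /pf preimage_setT probability_setT. Qed.

HB.instance Definition _ := Measure_isProbability.Build _ _ _ (pf P mf) pf1.
End pf_prob.

Definition projb (b : bool) (z : int -> bool * bool) : int -> bool :=
  fun i => if b then (z i).2 else (z i).1.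
Definition liftb (b : bool) (z : int -> bool * bool) : int -> bool * bool * bool :=
  fun i => (z i, b).

Lemma projb_m b : measurable_fun setT (projb b : Om2 -> Om1).
Proof. exact: (@map_meas (bool * bool)%type bool _ allb2P (fun p => if b then p.2 else p.1)). Qed.
Lemma liftb_m b : measurable_fun setT (liftb b : Om2 -> Om3).
Proof. exact: (@map_meas (bool * bool)%type (bool * bool * bool)%type _ allb2P (fun p => (p, b))). Qed.
Lemma pi12_m : measurable_fun setT (pi12 : Om3 -> Om2).
Proof. exact: (@map_meas (bool * bool * bool)%type (bool * bool)%type _ allb3P (fun p => p.1)). Qed.
Lemma Nmap_m : measurable_fun setT (Nmap : Om3 -> Om1).
Proof. exact: (@map_meas (bool * bool * bool)%type bool _ allb3P (fun p => if p.2 then p.1.2 else p.1.1)). Qed.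

Definition nub (R : realType) (rho : probability Om2 R) (b : bool) : probability Om1 R :=
  pf rho (projb_m b).

Lemma nub_marg1 (R : realType) (rho : probability Om2 R) B : nub rho true B = marg1 rho B.
Proof. by []. Qed.
Lemma nub_marg0 (R : realType) (rho : probability Om2 R) B : nub rho false B = marg0 rho B.
Proof. by []. Qed.

Lemma pf_shift_inv (A B : pointedType) (R : realType) (P : probability (Sh A) R)
  (f : Sh A -> Sh B) (mf : measurable_fun setT f)
  (hc : forall x, Defs.shift (f x) = f (Defs.shift x)) :
  shift_invariant P -> shift_invariant (pf P mf).
Proof.
move=> hP C mC; rewrite /pf.
transitivity (P (@Defs.shift A @^-1` (f @^-1` C))).
  by congr (P _); apply/seteqP; split => x /=; rewrite hc.
by apply: hP; rewrite -[X in measurable X]setTI; exact: mf.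
Qed.

Lemma base_meas : measurable [set z : Om2 | forall i, ((z i).1 <= (z i).2)%O].
Proof.
pose ok (j : int) := [set z : Om2 | ((z j).1 <= (z j).2)%O].
have okm j : measurable (ok j) by exact: (coord_meas allb2P (fun p => (p.1 <= p.2)%O)).
rewrite (_ : [set z | _] = \bigcap_n (ok n%:Z `&` ok (- n%:Z))).
  by apply: bigcapT_measurable => n; apply: measurableI.
apply/seteqP; split => z /=.
  by move=> H n _; split; apply: H.
move=> H; case => n.
  by have [] := H n Logic.I.
by rewrite NegzE; have [] := H n.+1 Logic.I.
Qed.

Section base.
Variables (R : realType) (X : set (int -> bool)) (rho : probability Om2 R)
  (hrho : is_base X rho).

Lemma bad_null (i : int) : rho [set z : Om2 | z i = (true, false)] = 0%E.
Proof.
have mS : measurable [set z : Om2 | z i = (true, false)] by exact: cyl_meas.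
have h1 : rho (~` [set z : Om2 | z i = (true, false)]) = 1%E.
  apply/eqP; rewrite eq_le (probability_le1 _ (measurableC mS)) /=.
  rewrite -hrho.2; apply: le_measure; rewrite ?inE.
  - exact: base_meas.
  - exact: measurableC.
  - by move=> z /= /(_ i); case: (z i) => [[] []].
move: h1; rewrite probability_setC // => /eqP.
have := probability_le1 rho mS; have := measure_ge0 rho [set z : Om2 | z i = (true, false)].
case: (rho _) => // r; rewrite !lee_fin => r0 r1 /eqP [] ?.
by congr (_%:E); lra.
Qed.

End base.

Lemma null_sub d (T : measurableType d) (R : realType) (m : {measure set T -> \bar R})
  (A N : set T) : measurable A -> measurable N -> m N = 0%E -> A `<=` N -> m A = 0%E.
Proof.
move=> mA mN mN0 AN; apply/eqP; rewrite eq_le measure_ge0 andbT -mN0.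
by apply: le_measure => //; rewrite inE.
Qed.

Lemma meas_eq_off d (T : measurableType d) (R : realType) (m : {measure set T -> \bar R})
  (S1 S2 D : set T) : measurable S1 -> measurable S2 -> measurable D -> m D = 0%E ->
  (forall t, ~ D t -> S1 t <-> S2 t) -> m S1 = m S2.
Proof.
move=> m1 m2 mD mD0 h.
rewrite (measureDI m m1 mD) (measureDI m m2 mD).
have z1 : m (S1 `&` D) = 0%E.
  by apply: (null_sub _ mD mD0) => //; (try exact: measurableI); move=> t [].
have z2 : m (S2 `&` D) = 0%E.
  by apply: (null_sub _ mD mD0) => //; (try exact: measurableI); move=> t [].
congr (_ + _)%E; last by apply: etrans; [exact: z1| exact: (esym z2)].
congr (m _); apply/seteqP; split => t [H1 H2];
  by split => //; apply/(h _ H2).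
Qed.

Lemma int_cases (i : int) : exists n : nat, i = n%:Z \/ i = - n%:Z.
Proof. by case: i => n; [exists n; left | exists n.+1; right; rewrite NegzE]. Qed.

Lemma addle0 (R : realType) (a b c : \bar R) : b = 0%E -> (a <= c)%E -> (a + b <= c)%E.
Proof. by move=> ->; rewrite adde0. Qed.

Lemma le0_of_eq (R : realType) (a : \bar R) : a = 0%E -> (a <= 0)%E.
Proof. by move=> ->. Qed.

Lemma eq_add_fin (R : realType) (x y : \bar R) :
  x \is a fin_num -> x = (y + x)%E -> y = 0%E.
Proof.
case: x => // r _; case: y => // s.
by move=> [] h; congr (_%:E); lra.
Qed.

Lemma measU2 d (T : measurableType d) (R : realType) (m : {measure set T -> \bar R})
  (A B : set T) : measurable A -> measurable B -> (m (A `|` B) <= m A + m B)%E.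
Proof. exact: measureU2. Qed.

Section key.
Variables (R : realType) (X : set (int -> bool)) (rho : probability Om2 R)
  (hrho : is_base X rho) (b : bool).

Lemma nub_shift : shift_invariant (nub rho b).
Proof. by apply: pf_shift_inv => //; exact: hrho.1.1. Qed.

Lemma nub_MX : MX X (nub rho b).
Proof.
apply: (hrho.1.2 _).2.
exists (pf rho (liftb_m b)); split.
  by apply: pf_shift_inv => //; exact: hrho.1.1.
by split => B mB.
Qed.

Variables (mu : probability Om1 R) (lam : probability Om3 R)
  (hl2 : forall B : set Om2, measurable B -> lam (pi12 @^-1` B) = rho B)
  (hl3 : forall B : set Om1, measurable B -> lam (Nmap @^-1` B) = mu B).

Definition Ns (i : int) := [set t : Om3 | Nmap t i = b].
Definition Ps (i : int) := [set t : Om3 | projb b (pi12 t) i = b].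
Definition Bs (i : int) := [set t : Om3 | (t i).1 = (true, false)].

Lemma Ns_m i : measurable (Ns i).
Proof. exact: (coord_meas allb3P (fun p => (if p.2 then p.1.2 else p.1.1) = b)). Qed.
Lemma Ps_m i : measurable (Ps i).
Proof. exact: (coord_meas allb3P (fun p => (if b then p.1.2 else p.1.1) = b)). Qed.
Lemma Bs_m i : measurable (Bs i).
Proof. exact: (coord_meas allb3P (fun p => p.1 = (true, false))). Qed.

Lemma lam_Ns i : lam (Ns i) = mu [set x : Om1 | x i = b].
Proof. exact: (hl3 (cyl_meas i b)). Qed.
Lemma lam_Ps i : lam (Ps i) = nub rho b [set x : Om1 | x i = b].
Proof.
apply: hl2.
exact: (coord_meas allb2P (fun p => (if b then p.2 else p.1) = b)).
Qed.
Lemma lam_Bs i : lam (Bs i) = 0%E.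
Proof.
rewrite -(bad_null hrho i); apply: hl2; exact: cyl_meas.
Qed.

Lemma Ns_sub i : Ns i `<=` Ps i `|` Bs i.
Proof.
move=> t; rewrite /Ns /Ps /Bs /Nmap /projb /pi12 /=.
by case: b; case: (t i) => [[[] []] []] /=; (try by left); (try by right).
Qed.

Lemma key_le : (mu (cyl0 b) <= nub rho b (cyl0 b))%E.
Proof.
rewrite /cyl0 -lam_Ns -lam_Ps.
apply: (@le_trans _ _ (lam (Ps 0 `|` Bs 0))).
  by apply: le_measure; rewrite ?inE; [exact: Ns_m|apply: measurableU; [exact: Ps_m|exact: Bs_m]|exact: Ns_sub].
apply: (le_trans (measU2 lam (Ps_m 0) (Bs_m 0))).
by apply: addle0; [exact: lam_Bs|].
Qed.

End key.

Section key2.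
Variables (R : realType) (X : set (int -> bool)) (rho : probability Om2 R)
  (hrho : is_base X rho) (b : bool).
Variables (mu : probability Om1 R) (lam : probability Om3 R)
  (hl2 : forall B : set Om2, measurable B -> lam (pi12 @^-1` B) = rho B)
  (hl3 : forall B : set Om1, measurable B -> lam (Nmap @^-1` B) = mu B)
  (hmu : shift_invariant mu)
  (heq : mu (cyl0 b) = nub rho b (cyl0 b)).

Lemma NP_eq i : lam (Ns b i) = lam (Ps b i).
Proof.
rewrite (lam_Ns b hl3) (lam_Ps b hl2) (shift_inv_coord hmu) (shift_inv_coord (nub_shift hrho b)).
exact: heq.
Qed.

Definition Es (i : int) := [set t : Om3 | Nmap t i <> projb b (pi12 t) i].

Lemma Es_m i : measurable (Es i).
Proof.
exact: (coord_meas allb3P (fun p => (if p.2 then p.1.2 else p.1.1) <> (if b then p.1.2 else p.1.1))).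
Qed.

Lemma Es_null i : lam (Es i) = 0%E.
Proof.
have mNP : measurable (Ns b i `\` Ps b i) by apply: measurableD; [exact: Ns_m|exact: Ps_m].
have mPN : measurable (Ps b i `\` Ns b i) by apply: measurableD; [exact: Ps_m|exact: Ns_m].
have z1 : lam (Ns b i `\` Ps b i) = 0%E.
  apply: (null_sub mNP (Bs_m i) (lam_Bs hrho hl2 i)).
  move=> t; rewrite /Ns /Ps /Bs /Nmap /projb /pi12 /=.
  by case: b; case: (t i) => [[[] []] []] //=; move=> [].
have e1 : lam (Ps b i) = (lam (Ps b i `\` Ns b i) + lam (Ps b i `&` Ns b i))%E :=
  measureDI lam (Ps_m b i) (Ns_m b i).
have e2 : lam (Ns b i) = (lam (Ns b i `\` Ps b i) + lam (Ns b i `&` Ps b i))%E :=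
  measureDI lam (Ns_m b i) (Ps_m b i).
have z2 : lam (Ps b i `\` Ns b i) = 0%E.
  apply: (@eq_add_fin _ (lam (Ps b i `&` Ns b i))).
    by apply: fin_num_measure; apply: measurableI; [exact: Ps_m|exact: Ns_m].
  by rewrite -e1 -NP_eq; move: e2; rewrite z1 add0e setIC => ->.
have mU : measurable ((Ns b i `\` Ps b i) `|` (Ps b i `\` Ns b i)) by apply: measurableU.
apply: (null_sub (Es_m i) mU).
  apply/eqP; rewrite eq_le measure_ge0 andbT; apply: (le_trans (measU2 lam mNP mPN)).
  by apply: addle0; [exact: z2| apply: le0_of_eq; exact: z1].
move=> t; rewrite /Es /Ns /Ps /Nmap /projb /pi12 /=.
by case: b; case: (t i) => [[[] []] []] //= H; (by left) || (by right).
Qed.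

Definition Dset := \bigcup_n (Es n%:Z `|` Es (- n%:Z)).

Lemma Dset_null : lam Dset = 0%E.
Proof.
have mF n : measurable (Es n%:Z `|` Es (- n%:Z)) by apply: measurableU; exact: Es_m.
have mD : measurable Dset by apply: bigcupT_measurable.
apply/eqP; rewrite eq_le measure_ge0 andbT.
apply: (le_trans (measure_sigma_subadditive lam mF mD _)) => //.
rewrite eseries0 // => n _ _.
apply/eqP; rewrite eq_le measure_ge0 andbT.
apply: (le_trans (measU2 lam (Es_m _) (Es_m _))).
by apply: addle0; [exact: Es_null| apply: le0_of_eq; exact: Es_null].
Qed.

Lemma key_eq (B : set Om1) : measurable B -> mu B = nub rho b B.
Proof.
move=> mB; rewrite -hl3 //.
transitivity (lam (pi12 @^-1` (projb b @^-1` B))); last first.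
  apply: hl2; rewrite -[X in measurable X]setTI; exact: projb_m.
have mD : measurable Dset.
  by apply: bigcupT_measurable => n; apply: measurableU; exact: Es_m.
have m1 : measurable (Nmap @^-1` B : set Om3).
  rewrite -[X in measurable X]setTI; exact: Nmap_m.
have m2 : measurable (pi12 @^-1` (projb b @^-1` B) : set Om3).
  rewrite -[X in measurable X]setTI; exact: (measurableT_comp (projb_m b) pi12_m).
apply: (meas_eq_off m1 m2 mD Dset_null).
move=> t nD; suff E : Nmap t = projb b (pi12 t) by rewrite /= E.
apply/funext => i; apply: contrapT => hne; apply: nD.
have [n [ei|ei]] := int_cases i; exists n => //; [left|right]; rewrite /Es /= -ei; exact: hne.
Qed.

End key2.

Section key3.
Variables (R : realType) (X : set (int -> bool)) (rho : probability Om2 R)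
  (hrho : is_base X rho) (b : bool).

Lemma MX_le (mu : probability Om1 R) : MX X mu -> (mu (cyl0 b) <= nub rho b (cyl0 b))%E.
Proof.
move=> hmu; have [lam [_ [hl2 hl3]]] := (hrho.1.2 mu).1 hmu.
exact: (key_le hrho b hl2 hl3).
Qed.

Lemma sup_eq : supMX R X b = nub rho b (cyl0 b).
Proof.
apply/eqP; rewrite eq_le; apply/andP; split.
  by apply: ge_ereal_sup => _ [mu hmu <-]; exact: MX_le.
by apply: ereal_sup_ubound; exists (nub rho b) => //; exact: nub_MX.
Qed.

Lemma MX_uniq (mu : probability Om1 R) : MX X mu -> mu (cyl0 b) = supMX R X b ->
  forall B : set Om1, measurable B -> mu B = nub rho b B.
Proof.
move=> hmu heq; have [lam [_ [hl2 hl3]]] := (hrho.1.2 mu).1 hmu.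
apply: (key_eq hrho hl2 hl3 hmu.1).
by rewrite heq sup_eq.
Qed.

End key3.

Lemma mul_cancel (R : realType) (x y t : \bar R) : x \is a fin_num -> y \is a fin_num ->
  t \is a fin_num -> t != 0%E -> (x * t = y * t)%E -> x = y.
Proof.
case: x => // r _; case: y => // q _; case: t => // s _ s0.
rewrite -!EFinM => -[] h; congr (_%:E).
have s0' : s != 0 by apply: contra s0 => /eqP ->.
by apply: (mulIf s0').
Qed.

Section cond.
Variables (R : realType) (X : set (int -> bool)) (hXm : measurable (X : set Om1))
  (nu : probability Om1 R) (hnu : MX X nu) (E : set Om1) (mE : measurable E)
  (hE : @Defs.shift bool @^-1` E = E) (nE : nu E != 0%E).

Definition condp : probability Om1 R := mnormalize (mrestr nu mE) nu.

Lemma condp_val (C : set Om1) : (condp C * nu E = nu (C `&` E))%E.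
Proof.
have fE : nu E \is a fin_num by apply: fin_num_measure.
rewrite /condp /= /mnormalize; case: ifPn => H.
  exfalso; move: H.
  change (((nu (setT `&` E) == 0)%E || (nu (setT `&` E) == +oo)%E) -> False).
  rewrite setTI (negbTE nE) /=.
  by move: fE; case: (nu E).
change ((nu (C `&` E) * ((fine (nu (setT `&` E)))^-1)%:E * nu E)%E = nu (C `&` E)).
rewrite setTI.
rewrite -muleA -{2}(fineK fE) -EFinM mulVf ?mule1 //.
by apply: contra nE => /eqP h; rewrite -(fineK fE) h.
Qed.

Lemma condp_MX : MX X condp.
Proof.
have fE : nu E \is a fin_num by apply: fin_num_measure.
split.
  move=> C mC; apply: (mul_cancel _ _ fE nE).
  - apply: fin_num_measure; rewrite -[X in measurable X]setTI; exact: shift_meas.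
  - exact: fin_num_measure.
  rewrite !condp_val -{1}hE -preimage_setI.
  apply: hnu.1; exact: measurableI.
apply: (mul_cancel _ _ fE nE) => //.
  exact: fin_num_measure.
rewrite condp_val mul1e.
have e : nu E = (nu (E `\` X) + nu (E `&` X))%E := measureDI nu mE hXm.
have z : nu (E `\` X) = 0%E.
  apply: (@null_sub _ _ _ nu _ (~` (X : set Om1))) => //.
  - exact: measurableD.
  - exact: measurableC.
  - by apply: etrans (probability_setC nu hXm) _; rewrite hnu.2 subee.
by rewrite setIC; move: e; rewrite z add0e => ->.
Qed.

End cond.

Lemma fin_ex (R : realType) (x : \bar R) : x \is a fin_num -> exists r : R, x = r%:E.
Proof. by move=> fx; exists (fine x); rewrite fineK. Qed.

Section ergo.
Variables (R : realType) (X : set (int -> bool)) (hXm : measurable (X : set Om1))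
  (rho : probability Om2 R) (hrho : is_base X rho) (b : bool).

Lemma nub_ergodic : ergodic (nub rho b).
Proof.
move=> B mB hB.
set nu := nub rho b.
have hnu : MX X nu := nub_MX hrho b.
have [->|n0] := eqVneq (nu B) 0%E; first by left.
have [->|n1] := eqVneq (nu B) 1%E; first by right.
exfalso.
have mC : measurable (~` B) by exact: measurableC.
have hC : @Defs.shift bool @^-1` (~` B) = ~` B by rewrite -[in RHS]hB.
have eC : nu (~` B) = (1 - nu B)%E := probability_setC nu mB.
have nC : nu (~` B) != 0%E.
  rewrite eC; apply: contra n1 => /eqP h.
  have fB : nu B \is a fin_num by apply: fin_num_measure.
  have [t et] := fin_ex fB; move: h; rewrite et -EFinB => -[] h.
  by apply/eqP; congr (_%:E); lra.
set PB := condp nu mB.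
set PC := condp nu mC.
have hPB : MX X PB := condp_MX hXm hnu mB hB n0.
have hPC : MX X PC := condp_MX hXm hnu mC hC nC.
have mc : measurable (cyl0 b) by exact: cyl_meas.
have lB : (PB (cyl0 b) <= nu (cyl0 b))%E := MX_le hrho b hPB.
have lC : (PC (cyl0 b) <= nu (cyl0 b))%E := MX_le hrho b hPC.
have vB : (PB (cyl0 b) * nu B = nu (cyl0 b `&` B))%E := condp_val mB n0 (cyl0 b).
have vC : (PC (cyl0 b) * nu (~` B) = nu (cyl0 b `&` ~` B))%E := condp_val mC nC (cyl0 b).
have dc : nu (cyl0 b) = (nu (cyl0 b `\` B) + nu (cyl0 b `&` B))%E := measureDI nu mc mB.
rewrite setDE in dc.
have vBB : (PB B * nu B = nu (B `&` B))%E := condp_val mB n0 B.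
have vCC : (PC (~` B) * nu (~` B) = nu (~` B `&` ~` B))%E := condp_val mC nC (~` B).
rewrite setIid in vBB; rewrite setIid in vCC.
have uB : PB (cyl0 b) = supMX R X b -> PB B = nu B.
  by move=> h; apply: (MX_uniq hrho hPB h mB).
have uC : PC (cyl0 b) = supMX R X b -> PC (~` B) = nu (~` B).
  by move=> h; apply: (MX_uniq hrho hPC h mC).
rewrite (sup_eq hrho) in uB uC.
have [t et] := fin_ex (fin_num_measure nu _ mB).
have [tc etc] := fin_ex (fin_num_measure nu _ mC).
have [a ea] := fin_ex (fin_num_measure PB _ mc).
have [a' ea'] := fin_ex (fin_num_measure PC _ mc).
have [pbb epbb] := fin_ex (fin_num_measure PB _ mB).
have [pcc epcc] := fin_ex (fin_num_measure PC _ mC).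
have [s es] := fin_ex (fin_num_measure nu _ mc).
have mcB : measurable (cyl0 b `&` B) by exact: measurableI.
have mcC : measurable (cyl0 b `&` ~` B) by exact: measurableI.
have [u eu] := fin_ex (fin_num_measure nu _ mcB).
have [v ev] := fin_ex (fin_num_measure nu _ mcC).
have t0 : 0 <= t by rewrite -lee_fin -et measure_ge0.
have t1 : t <= 1 by rewrite -lee_fin -et probability_le1.
move: n0 n1 eC lB lC vB vC dc vBB vCC uB uC.
rewrite et etc ea ea' epbb epcc es eu ev.
rewrite -!EFinM -EFinB -EFinD !lee_fin.
move=> n0 n1 [] eC lB lC [] vB [] vC [] dc [] vBB [] vCC uB uC.
have tn0 : t != 0 by apply: contra n0 => /eqP ->.
have tn1 : t != 1 by apply: contra n1 => /eqP ->.
have [ha|ha] := eqVneq a s.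
  have := uB (congr1 _ ha) => -[] h.
  move: vBB; rewrite h => hh.
  have : t * (t - 1) = 0 by lra.
  by move/eqP; rewrite mulf_eq0 subr_eq0 (negbTE tn0) (negbTE tn1).
have [ha'|ha'] := eqVneq a' s.
  have := uC (congr1 _ ha') => -[] h.
  move: vCC; rewrite h => hh.
  have : tc * (tc - 1) = 0 by lra.
  move/eqP; rewrite mulf_eq0 subr_eq0 => /orP [] /eqP h2.
    by move/eqP: tn1; apply; lra.
  by move/eqP: tn0; apply; lra.
have la : a < s by rewrite lt_neqAle ha lB.
have la' : a' < s by rewrite lt_neqAle ha' lC.
have tp : 0 < t by rewrite lt_neqAle eq_sym tn0 t0.
have tq : t < 1 by rewrite lt_neqAle tn1 t1.
have h1 : 0 < (s - a) * t by apply: mulr_gt0; rewrite // subr_gt0.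
have h2 : 0 < (s - a') * tc by apply: mulr_gt0; rewrite ?subr_gt0 // eC subr_gt0.
have e : (s - a) * t + (s - a') * tc = s * (t + tc) - (a * t + a' * tc) by ring.
rewrite vB vC [u + v]addrC -dc eC in e.
have e2 : s * (t + (1 - t)) = s by ring.
rewrite eC in h2.
clear -h1 h2 e e2.
lra.
Qed.

End ergo.

Definition Wset (L : seq int) (S : set (int -> bool)) : set Om1 :=
  [set x | exists2 y, S y & forall i, inl i L -> x i = y i].

Lemma Wset_m (L : seq int) (S : set (int -> bool)) : measurable (Wset L S).
Proof.
elim: L S => [|j L IH] S.
  have [[y Sy]|nS] := pselect (exists y, S y).
    rewrite (_ : Wset _ _ = setT) //; apply/seteqP; split => x //= _.
    by exists y.
  rewrite (_ : Wset _ _ = set0) //; apply/seteqP; split => x //= [y Sy _].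
  by apply: nS; exists y.
rewrite (_ : Wset _ _ = ([set x : Om1 | x j = true] `&` Wset L (S `&` [set y | y j = true]))
   `|` ([set x : Om1 | x j = false] `&` Wset L (S `&` [set y | y j = false]))).
  apply: measurableU; apply: measurableI; (try exact: cyl_meas); exact: IH.
apply/seteqP; split => x /=.
  move=> [y Sy hy]; have xj := hy j (or_introl erefl).
  case: (boolP (y j)) => yj.
    by left; split; [rewrite xj yj | exists y => //; move=> i Li; apply: hy; right].
  by right; split; [rewrite xj (negbTE yj) | exists y => //; [split => //; exact: negbTE | move=> i Li; apply: hy; right]].
move=> [[xj [y [Sy yj] hy]]|[xj [y [Sy yj] hy]]]; exists y => // i [<-|Li];
  by [rewrite xj yj | apply: hy].
Qed.

Fixpoint win (n : nat) : seq int :=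
  match n with 0 => [:: 0] | m.+1 => m.+1%:Z :: - (m.+1%:Z) :: win m end.

Lemma win_in (n m : nat) : (n <= m)%N -> inl (n%:Z) (win m) /\ inl (- n%:Z) (win m).
Proof.
elim: m => [|m IH].
  by rewrite leqn0 => /eqP ->; split; left; rewrite ?oppr0.
rewrite leq_eqVlt => /orP [/eqP ->|]; first by split; [left|right; left].
rewrite ltnS => /IH [h1 h2]; split; right; right => //.
Qed.

Lemma win_absz (i : int) (m : nat) : (`|i|%N <= m)%N -> inl i (win m).
Proof.
have [n [->|->]] := int_cases i => /=.
  by rewrite ?absz_nat => /win_in [].
by rewrite ?abszN ?absz_nat => /win_in [].
Qed.

Lemma closed_meas (X : set (int -> bool)) :
  closed (X : set (prod_topology (fun _ : int => bool))) -> measurable (X : set Om1).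
Proof.
move=> cX.
rewrite (_ : (X : set Om1) = \bigcap_n Wset (win n) X).
  by apply: bigcapT_measurable => n; exact: Wset_m.
apply/seteqP; split => x.
  by move=> Xx n _; exists x.
move=> hx.
have [y hy] : {y : nat -> int -> bool & forall n, X (y n) /\ forall i, inl i (win n) -> x i = y n i}.
  apply: (@choice nat (int -> bool) (fun n yn => X yn /\ forall i, inl i (win n) -> x i = yn i)) => n.
  by have [yn ? ?] := hx n Logic.I; exists yn.
apply: (@closed_cvg nat (prod_topology (fun _ : int => bool)) \oo _ y X cX).
  by apply: nearW => n; exact: (hy n).1.
apply/cvg_sup => t U [V] [[W] oW <-] WfN WU.
apply: (filterS WU); rewrite nbhs_simpl; exists `|t|%N => // n /= hn.
by rewrite /= -(hy n).2 //; apply: win_absz.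
Qed.

Unset Implicit Arguments.
Theorem corollary4p6 (R : realType) (X : set (int -> bool))
  (hX : subshift X) (hsw : sandwich_mts R X)
  (rho : probability Om2 R) (hrho : is_base X rho) :
  [/\ ergodic (marg0 rho) /\ ergodic (marg1 rho),
      (forall rho' : probability Om2 R, is_base X rho' ->
         forall B : set Om1, measurable B ->
           marg0 rho' B = marg0 rho B /\ marg1 rho' B = marg1 rho B),
      (marg1 rho (cyl0 true) = supMX R X true /\
       marg0 rho (cyl0 false) = supMX R X false),
      (exists2 nu1 : probability Om1 R, MX X nu1 &
         (forall B : set Om1, measurable B -> nu1 B = marg1 rho B) /\
         (forall mu : probability Om1 R, MX X mu ->
            mu (cyl0 true) = supMX R X true ->
            forall B : set Om1, measurable B -> mu B = nu1 B))
    & (exists2 nu0 : probability Om1 R, MX X nu0 &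
         (forall B : set Om1, measurable B -> nu0 B = marg0 rho B) /\
         (forall mu : probability Om1 R, MX X mu ->
            mu (cyl0 false) = supMX R X false ->
            forall B : set Om1, measurable B -> mu B = nu0 B))].
Proof.
have hXm := closed_meas hX.1.
split.
- by split; [exact: (nub_ergodic hXm hrho false) | exact: (nub_ergodic hXm hrho true)].
- move=> rho' hrho' B mB; split.
    exact: (MX_uniq hrho (nub_MX hrho' false) (esym (sup_eq hrho' false)) mB).
  exact: (MX_uniq hrho (nub_MX hrho' true) (esym (sup_eq hrho' true)) mB).
- by split; [exact: (esym (sup_eq hrho true)) | exact: (esym (sup_eq hrho false))].
- exists (nub rho true); first exact: (nub_MX hrho true).
  split => // mu hmu he B mB; exact: (MX_uniq hrho hmu he mB).
- exists (nub rho false); first exact: (nub_MX hrho false).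
  split => // mu hmu he B mB; exact: (MX_uniq hrho hmu he mB).
Qed.
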